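(* Let $\mathcal{O}$ be a one-counter system with state set $Q$ and let $a\in\mathbb{N}$. There exists a one-counter system $\mathcal{O}_a$ with the same state set $Q$ such that for all $p,q\in Q$ and every $K\in\mathbb{N}$: there is a path of length exactly $K$ from $(p,0)$ to $(q,0)$ in $\mathcal{O}_a$ if and only if there is a path from $(p,a)$ to $(q,a)$ in $\mathcal{O}$ on which exactly $K+1$ of the appearing configurations (counted with multiplicity, i.e., by position along the path) have counter value at least $a$.
   Context: $\mathbb{N}=\{0,1,2,\dots\}$. A one-counter system (OCS) $\mathcal{O}$ consists of a finite set $Q$ of states, a set $T_{>0}\subseteq Q\times\{-1,0,1\}\times Q$ of non-zero transitions and a set $T_{=0}\subseteq Q\times\{0,1\}\times Q$ of zero tests; $T=T_{>0}\cup T_{=0}$. A configuration is a pair $(q,c)\in Q\times\mathbb{N}$, with state $q$ and counter value $c$. A transition $t=(p,d,q)\in T$ can be fired in configuration $(p,c)$ if either $t\in T_{>0}$ and $c>0$, or $t\in T_{=0}$ and $c=0$; the result is $(q,c+d)$, and we write $(p,c)\xrightarrow{t}(q,c+d)$. A path is a sequence $(\gamma_1,t_1)(\gamma_2,t_2)\cdots(\gamma_m,t_m)$ of configurations and transitions such that there are configurations with $\gamma_i\xrightarrow{t_i}\gamma_{i+1}$ for $i=1,\dots,m$; its source is $\gamma_1$, its target is $\gamma_{m+1}$, its length is $m$, the configurations appearing on it are $\gamma_1,\dots,\gamma_{m+1}$, and it is a path from its source to its target. *)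

(* Defs.v *)
From HB Require Import structures.
From mathcomp Require Import all_boot all_order all_algebra.
Set Implicit Arguments. Unset Strict Implicit. Unset Printing Implicit Defensive.
Import Order.TTheory GRing.Theory Num.Theory.

(* A one-counter system over a finite state type Q.
   tpos p d q  <=> (p,d,q) \in T_{>0}  (d \in {-1,0,1})
   tzero p d q <=> (p,d,q) \in T_{=0}  (d \in {0,1})                      *)
Record OCS (Q : finType) := MkOCS {
  tpos  : Q -> int -> Q -> bool;
  tzero : Q -> int -> Q -> bool;
  tpos_dom  : forall p d q, tpos p d q -> d \in [:: (-1)%R; 0%R; 1%R];
  tzero_dom : forall p d q, tzero p d q -> d \in [:: 0%R; 1%R]
}.

Inductive trans (Q : finType) :=
| TPos  of Q & int & Q
| TZero of Q & int & Q.

Definition config (Q : finType) := (Q * nat)%type.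

Definition fires (Q : finType) (O : OCS Q) (t : trans Q) (g g' : config Q) : Prop :=
  match t with
  | TPos p d q => [/\ tpos O p d q, g.1 = p, (0 < g.2)%N, g'.1 = q
                    & (g'.2 : int) = (g.2 : int) + d]%R
  | TZero p d q => [/\ tzero O p d q, g.1 = p, g.2 = 0%N, g'.1 = q
                    & (g'.2 : int) = (g.2 : int) + d]%R
  end.

(* run O g ts cs g' : there is a path with source g, target g', sequence of
   transitions ts (its length is size ts), and cs is the list of all
   configurations appearing on it, in order and with multiplicity
   (gamma_1, ..., gamma_{m+1}). *)
Inductive run (Q : finType) (O : OCS Q) :
    config Q -> seq (trans Q) -> seq (config Q) -> config Q -> Prop :=
| run_nil g : run O g [::] [:: g] g
| run_cons g t g1 ts cs g' :
    fires O t g g1 -> run O g1 ts cs g' -> run O g (t :: ts) (g :: cs) g'.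

(* Main.v *)
Require Import Defs.
From mathcomp Require Import all_boot all_order all_algebra.
From mathcomp Require Import zify.
From Stdlib Require Import ClassicalEpsilon.
Set Implicit Arguments. Unset Strict Implicit. Unset Printing Implicit Defensive.

Definition pb (P : Prop) : bool := if excluded_middle_informative P then true else false.
Lemma pbP (P : Prop) : pb P <-> P.
Proof. rewrite /pb; case: excluded_middle_informative => //. Qed.

Section S.
Variables (Q : finType) (O : OCS Q) (a : nat).

Definition exc (r r' : Q) : Prop :=
  exists t ts cs, run O (r, a) (t :: ts) ((r, a) :: cs ++ [:: (r', a)]) (r', a)
    /\ all (fun g : config Q => (g.2 < a)%N) cs.
Definition stp (r r' : Q) : Prop := exists t, fires O t (r, a) (r', a.+1).

Definition tz (r : Q) (d : int) (r' : Q) : bool :=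
  ((d == 0%R) && pb (exc r r')) || ((d == 1%R) && pb (stp r r')).

Lemma tz_dom p d q : tz p d q -> d \in [:: 0%R; 1%R].
Proof. by case/orP=> /andP[/eqP -> _]. Qed.

Definition Oa := MkOCS (@tpos_dom Q O) tz_dom.

Lemma fires_bd t g g1 : fires O t g g1 -> (g.2 <= g1.2 + 1)%N /\ (g1.2 <= g.2 + 1)%N.
Proof.
case: t => p d q /=.
- case=> H _ H0 _ E; move: (tpos_dom H); rewrite !inE => /or3P[] /eqP Ed;
  subst d; lia.
- case=> H _ H0 _ E; move: (tzero_dom H); rewrite !inE => /orP[] /eqP Ed;
  subst d; lia.
Qed.

Lemma run_head g ts cs g' : run O g ts cs g' -> cs = g :: behead cs.
Proof. by case. Qed.

Lemma run_cat g ts cs h ts' cs' g' :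
  run O g ts cs h -> run O h ts' (h :: cs') g' -> run O g (ts ++ ts') (cs ++ cs') g'.
Proof.
elim=> [x|x t x1 ts0 cs0 x' F R IH] R2 //=.
exact: run_cons F (IH R2).
Qed.

Lemma count0 (cs : seq (config Q)) :
  all (fun g : config Q => (g.2 < a)%N) cs -> count (fun g : config Q => (a <= g.2)%N) cs = 0%N.
Proof. elim: cs => //= x s IH /andP[h1 h2]; by rewrite IH // leqNgt h1. Qed.

Lemma split_run g ts cs g' : run O g ts cs g' -> (g.2 < a)%N -> (a <= g'.2)%N ->
  exists ts1 cs1 ts2 cs2 h, h.2 = a /\ run O g ts1 (cs1 ++ [:: h]) h /\
    all (fun g : config Q => (g.2 < a)%N) cs1 /\ run O h ts2 cs2 g' /\
    (size ts = size ts1 + size ts2)%N /\ cs = cs1 ++ cs2.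
Proof.
elim=> [x|x t x1 ts0 cs0 x' F R IH] Hx Hx'.
- by move: (leq_ltn_trans Hx' Hx); rewrite ltnn.
- case: (ltnP x1.2 a) => H1.
  + have [ts1 [cs1 [ts2 [cs2 [h [E [R1 [A [R2 [S C]]]]]]]]]] := IH H1 Hx'.
    exists (t :: ts1), (x :: cs1), ts2, cs2, h; split=> //; split.
    * exact: run_cons F R1.
    * split; first by rewrite /= Hx A.
      by split=> //; split; [rewrite /= S | rewrite C].
  + have [B1 B2] := fires_bd F.
    exists [:: t], [:: x], ts0, cs0, x1; split; first lia.
    split; first exact: run_cons F (@run_nil _ _ _).
    split; first by rewrite /= Hx.
    split=> //; split=> //.

Qed.

Lemma sound g ts cs g' : run Oa g ts cs g' -> forall q, g' = (q, 0%N) ->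
  exists ts' cs', run O (g.1, (a + g.2)%N) ts' cs' (q, a) /\
    count (fun g : config Q => (a <= g.2)%N) cs' = (size ts).+1.
Proof.
elim=> [x|x t x1 ts0 cs0 x' F R IH] q E.
- subst x; exists [::], [:: (q, a)]; rewrite /= addn0 leqnn; split=> //.
  exact: run_nil.
- have [ts' [cs' [R' C']]] := IH q E.
  case: x F => xp xc F; case: x1 F R R' {IH} => yp yc F R R'.
  case: t F => p d r F; rewrite /= in F.
  + case: F => /= H Ep H0 Er Ed; subst p r.
    exists (TPos xp d yp :: ts'), ((xp, (a + xc)%N) :: cs'); split.
    * apply: run_cons R'; rewrite /=; split=> //.
      - by rewrite addn_gt0 H0 orbT.
      - lia.
    * by rewrite /= leq_addr C'.
  + case: F => /= H Ep H0 Er Ed; subst p r xc.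
    case/orP: H => /andP[/eqP Hd /pbP Hs]; subst d.
    * have Ey : yc = 0%N by lia.
      subst yc.
      case: Hs => t0 [ts1 [cs1 [R1 A]]].
      rewrite addn0 in R' *.
      have HH := run_head R'.
      case: cs' HH R' C' => [|c cs2] // [] -> R' C2.
      have RC := run_cat R1 R'.
      eexists; eexists; split; first exact: RC.
      rewrite /= leqnn -catA count_cat count0 // /= leqnn.
      rewrite /= leqnn in C2. lia.
    * have Ey : yc = 1%N by lia.
      subst yc.
      case: Hs => t0 Ft.
      rewrite addn0 addn1 in R' *.
      exists (t0 :: ts'), ((xp, a) :: cs'); split; first exact: run_cons Ft R'.
      by rewrite /= leqnn C'.
Qed.

Definition P := fun g : config Q => (a <= g.2)%N.

Lemma compl n : forall ts gp gc cs q, (size ts < n)%N -> run O (gp, gc) ts cs (q, a) ->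
  (a <= gc)%N -> exists ts' cs', run Oa (gp, (gc - a)%N) ts' cs' (q, 0%N) /\ (size ts').+1 = count P cs.
Proof.
elim: n => [//|n IHn] ts gp gc cs q Hs R Ha.
inversion R as [g0 E1 E2 E3 | g0 t g1 ts0 cs0 g'0 F R0 E1 E2 E3]; subst.
- rewrite subnn; exists [::], [:: (q, 0%N)]; split.
  + exact: run_nil.
  + by rewrite /= /P leqnn.
- case: g1 F R0 => g1p g1c F R0.
  have [B1 B2] := fires_bd F; rewrite /= in B1 B2.
  case: (ltnP g1c a) => H1.
  + have Eg : gc = a by lia.
    subst gc.
    have [ts1 [cs1 [ts2 [cs2 [[hp hc] [/= Eh [R1 [A [R2 [Sz Cs]]]]]]]]]] :=
      split_run R0 H1 (leqnn a).
    subst hc cs0.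
    have Hs2 : (size ts2 < n)%N by move: Hs; rewrite /= Sz; lia.
    have [ts' [cs' [Ra C]]] := IHn _ _ _ _ _ Hs2 R2 (leqnn a).
    exists (TZero gp 0%R hp :: ts'), ((gp, (a - a)%N) :: cs'); split.
    * apply: run_cons Ra; rewrite /= subnn; split=> //.
      rewrite /tz eqxx /=; apply/orP; left; apply/pbP.
      by exists t, ts1, cs1; split=> //; exact: run_cons F R1.
    * by rewrite /= /P leqnn count_cat count0 //= C.
  + have [ts' [cs' [Ra C]]] := IHn _ _ _ _ _ (Hs : (size ts0 < n)%N) R0 H1.
    rewrite /= /P Ha /= -C.
    case: (ltnP a gc) => H2.
    * clear R Hs; case: t F => p d r /= F.
      - case: F => Ht Ep H0 Er Ed; subst p r.
        exists (TPos gp d g1p :: ts'), ((gp, (gc - a)%N) :: cs'); split=> //.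
        apply: run_cons Ra; rewrite /=; split=> //; [lia | lia].
      - case: F => _ _ E0; lia.
    * have Eg : gc = a by lia.
      subst gc.
      have [Ey|Ey] : g1c = a \/ g1c = a.+1 by lia.
      - subst g1c.
        exists (TZero gp 0%R g1p :: ts'), ((gp, (a - a)%N) :: cs'); split=> //.
        apply: run_cons Ra; rewrite /= !subnn; split=> //.
        rewrite /tz eqxx /=; apply/orP; left; apply/pbP.
        exists t, [::], [::]; split=> //.
        exact: run_cons F (@run_nil _ _ _).
      - subst g1c.
        exists (TZero gp 1%R g1p :: ts'), ((gp, (a - a)%N) :: cs'); split=> //.
        apply: run_cons Ra; rewrite /= subnn; split=> //.
        + rewrite /tz; apply/orP; right; apply/andP; split=> //; apply/pbP.
          by exists t.
        + lia.
Qed.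
End S.

Theorem mainTheorem13 (Q : finType) (O : OCS Q) (a : nat) :
  exists Oa : OCS Q,
    forall (p q : Q) (K : nat),
      (exists ts cs, run Oa (p, 0%N) ts cs (q, 0%N) /\ size ts = K)
      <->
      (exists ts cs, run O (p, a) ts cs (q, a) /\
                     count (fun g : config Q => (a <= g.2)%N) cs = K.+1).
Proof.
exists (Oa O a) => p q K; split.
- case=> ts [cs [R <-]].
  have [ts' [cs' [R' C]]] := sound R (erefl _).
  rewrite /= addn0 in R'.
  by exists ts', cs'.
- case=> ts [cs [R C]].
  have [ts' [cs' [R' C']]] := compl (ltnSn (size ts)) R (leqnn a).
  rewrite subnn in R'.
  exists ts', cs'; split=> //.
  by apply/eqP; rewrite -eqSS C' /P -C.
Qed.
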